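(* Let $\gamma\in\Gamma$, $n'\in\mathbb{N}_+$ and $v_1,v_2\in V$. If $v_1\preceq v_2$ and $\|v_1\|_1<\|v_2\|_1$, then $\|\varphi^{(\gamma)}_{n'}(v_1)\|_1<\|\varphi^{(\gamma)}_{n'}(v_2)\|_1$.
   Context: $\sigma(x)=\max(0,x)$; $\mathrm{RL}(n,n')$ ($n,n'\in\mathbb{N}_+$) is the set of maps $h:\mathbb{R}^n\to\mathbb{R}^{n'}$, $h(x)_i=\sigma(\langle x,w_i\rangle+b_i)$ for some $W\in\mathbb{R}^{n'\times n}$ with rows $w_i$, $b\in\mathbb{R}^{n'}$; convention: $\mathrm{RL}(0,n')$ are constant maps $\{0\}\to\mathbb{R}^{n'}$ with $\mathcal{H}_{n'}(\mathcal{S}_h)={\rm e}_0$. $S_h(x)_i=1$ iff $\langle x,w_i\rangle+b_i>0$ else $0$; $\mathcal{S}_h=\{S_h(x)\}$; $|s|=\sum_is_i$. $V$: sequences $(v_j)_{j\in\mathbb{N}}$ of nonnegative integers with finite sum, $\|v\|_1=\sum_jv_j$; ${\rm e}_i$ has $({\rm e}_i)_j=\delta_{ij}$; $v\preceq w$ iff $\sum_{j\ge J}v_j\le\sum_{j\ge J}w_j$ for all $J\in\mathbb{N}$; for finite families, $\max_i(v^{(i)})_J=\max_i\sum_{j\ge J}v^{(i)}_j-\max_i\sum_{j\ge J+1}v^{(i)}_j$. $\mathcal{H}_{n'}(\mathcal{S})=(|\{s\in\mathcal{S}:|s|=j\}|)_j$. $\Gamma$: families $(\gamma_{n,n'})_{n'\in\mathbb{N}_+,n\in\{0,\dots,n'\}}$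 in $V$ with (i) $\max\{\mathcal{H}_{n'}(\mathcal{S}_h):h\in\mathrm{RL}(n,n')\}\preceq\gamma_{n,n'}$, (ii) $n\le\tilde n\le n'\Rightarrow\gamma_{n,n'}\preceq\gamma_{\tilde n,n'}$. $\mathrm{cl}_{i^*}(v)_i=v_i$ ($i<i^*$), $\sum_{j\ge i^*}v_j$ ($i=i^*$), $0$ ($i>i^*$). $\varphi^{(\gamma)}_{n'}(v)=\sum_{n=0}^\infty v_n\,\mathrm{cl}_{\min(n,n')}(\gamma_{\min(n,n'),n'})$. *)

(* Defs.v *)
From HB Require Import structures.
From mathcomp Require Import all_boot all_order all_algebra.
From mathcomp Require Import boolp.
From mathcomp Require Import Rstruct.
From Stdlib Require Rdefinitions.
Local Notation R := Rdefinitions.R.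

Set Implicit Arguments. Unset Strict Implicit. Unset Printing Implicit Defensive.
Import Order.TTheory GRing.Theory Num.Theory.

(* ---------- The space V of finitely supported nat sequences ----------
   An element v of V is represented by a finite list v : seq nat, with
   v_j := nth 0 v j (so v_j = 0 for j >= size v). *)

Definition vcoef (v : seq nat) (j : nat) : nat := nth 0 v j.

Definition norm1 (v : seq nat) : nat := sumn v.

Definition tail (v : seq nat) (J : nat) : nat := sumn (drop J v).

Definition vprec (v w : seq nat) : Prop := forall J : nat, tail v J <= tail w J.

Definition evec (i : nat) : seq nat := rcons (nseq i 0) 1.

Definition vadd (v w : seq nat) : seq nat :=
  mkseq (fun j => vcoef v j + vcoef w j) (maxn (size v) (size w)).
Definition vscale (k : nat) (v : seq nat) : seq nat := map (muln k) v.

Definition vmax (l : seq (seq nat)) : seq nat :=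
  mkseq (fun J => \max_(v <- l) tail v J - \max_(v <- l) tail v J.+1)
        (\max_(v <- l) size v).

Definition cl (istar : nat) (v : seq nat) : seq nat :=
  mkseq (fun i => if i < istar then vcoef v i
                  else if i == istar then tail v istar else 0) istar.+1.

(* A layer h in RL(n,n') (n >= 1) is given by weights W (rows w_i) and bias b.
   S_h(x)_i = 1 iff <x,w_i> + b_i > 0. *)
Definition pattern (n n' : nat) (W : 'I_n' -> 'I_n -> R) (b : 'I_n' -> R)
  (x : 'I_n -> R) : {ffun 'I_n' -> bool} :=
  [ffun i => (0 < (\sum_(k < n) x k * W i k)%R + b i)%R].

Definition patset (n n' : nat) (W : 'I_n' -> 'I_n -> R) (b : 'I_n' -> R)
  : {set {ffun 'I_n' -> bool}} :=
  [set s | `[< exists x : 'I_n -> R, pattern W b x = s >] ].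

Definition psize (n' : nat) (s : {ffun 'I_n' -> bool}) : nat :=
  \sum_(i < n') (s i : nat).

Definition hist (n' : nat) (P : {set {ffun 'I_n' -> bool}}) : seq nat :=
  mkseq (fun j => #|[set s in P | psize s == j]|) n'.+1.

Definition achS (n n' : nat) : {set {set {ffun 'I_n' -> bool}}} :=
  [set P | `[< exists (W : 'I_n' -> 'I_n -> R) (b : 'I_n' -> R), patset W b = P >] ].

(* The family { H_{n'}(S_h) : h in RL(n,n') }, with the convention that for
   n = 0 (constant maps) H_{n'}(S_h) = e_0. *)
Definition hists (n n' : nat) : seq (seq nat) :=
  if n == 0 then [:: evec 0] else [seq hist P | P <- enum (achS n n')].

(* ---------- The class Gamma ----------
   gamma n n' stands for gamma_{n,n'}; only n' >= 1, n <= n' matter. *)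
Definition InGamma (gamma : nat -> nat -> seq nat) : Prop :=
  (forall n' n : nat, 0 < n' -> n <= n' -> vprec (vmax (hists n n')) (gamma n n'))
  /\ (forall n' n nt : nat, 0 < n' -> n <= nt -> nt <= n' ->
        vprec (gamma n n') (gamma nt n')).

Definition phi (gamma : nat -> nat -> seq nat) (n' : nat) (v : seq nat) : seq nat :=
  foldr vadd [::]
    [seq vscale (vcoef v n) (cl (minn n n') (gamma (minn n n') n')) | n <- iota 0 (size v)].

(* Main.v *)
Require Import Defs.
From mathcomp Require Import all_boot.
From mathcomp Require Import zify.

Lemma sumn_mkseq f m : sumn (mkseq f m) = \sum_(j < m) f j.
Proof. by rewrite sumnE /mkseq big_map -(big_mkord xpredT) /index_iota subn0. Qed.

Lemma sum_nth_pad (a : seq nat) m : size a <= m -> \sum_(j < m) nth 0 a j = sumn a.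
Proof.
elim: a m => [|x a IH] m /=.
  by move=> _; rewrite big1 // => j _; rewrite nth_nil.
case: m => [//|m] hm.
by rewrite big_ord_recl /= IH.
Qed.

Lemma norm1_vadd a b : norm1 (vadd a b) = norm1 a + norm1 b.
Proof.
rewrite /norm1 /vadd sumn_mkseq big_split /=.
rewrite !sum_nth_pad //; [exact: leq_maxr | exact: leq_maxl].
Qed.

Lemma norm1_vscale k v : norm1 (vscale k v) = k * norm1 v.
Proof. by elim: v => [|x v IH] /=; rewrite ?muln0 // /norm1 /= mulnDr -IH. Qed.

Lemma sum_drop (w : seq nat) i : \sum_(j < i) nth 0 w j + sumn (drop i w) = sumn w.
Proof.
elim: i w => [|i IH] w; first by rewrite big_ord0 drop0.
case: w => [|x w].
  by rewrite big1 // => j _; rewrite nth_nil.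
by rewrite big_ord_recl /= -addnA IH.
Qed.

Lemma norm1_cl i w : norm1 (cl i w) = norm1 w.
Proof.
rewrite /norm1 /cl sumn_mkseq big_ord_recr /= ltnn eqxx.
rewrite (eq_bigr (fun j : 'I_i => nth 0 w j)); last by move=> j _; rewrite ltn_ord.
exact: sum_drop.
Qed.

Lemma norm1_foldr L : norm1 (foldr vadd [::] L) = sumn (map norm1 L).
Proof. by elim: L => [|a L IH] //=; rewrite norm1_vadd IH. Qed.

Fixpoint Sm (c : nat -> nat) (v : seq nat) : nat :=
  if v is x :: v' then x * c 0 + Sm (fun n => c n.+1) v' else 0.

Lemma S_sum c v : Sm c v = \sum_(i <- iota 0 (size v)) nth 0 v i * c i.
Proof.
elim: v c => [|x v IH] c /=; first by rewrite big_nil.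
rewrite big_cons /= IH -(addn0 1) iotaDl big_map.
by apply: congr1; apply: eq_bigr.
Qed.

Definition mono (c : nat -> nat) := forall n m, n <= m -> c n <= c m.

Lemma S_lb c v : mono c -> c 0 * norm1 v <= Sm c v.
Proof.
elim: v c => [|x v IH] c hc /=; first by rewrite /norm1 muln0.
have h1 : mono (fun n => c n.+1) by move=> n m h; apply: hc.
have := IH _ h1. have := hc 0 1 isT.
rewrite /norm1 /=. move=> h2 h3.
have : c 0 * sumn v <= c 1 * sumn v by rewrite leq_mul2r h2 orbT.
nia.
Qed.

Lemma S_zero c v : sumn v = 0 -> Sm c v = 0.
Proof.
elim: v c => [|x v IH] c //=.
move=> h; rewrite IH; last by lia.
have -> : x = 0 by lia. done.
Qed.

Lemma vprec_cons x v y w : vprec (x :: v) (y :: w) -> vprec v w.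
Proof. by move=> h J; have := h J.+1. Qed.

Lemma S_main c v w : mono c -> vprec v w ->
  Sm c v + c 0 * (norm1 w - norm1 v) <= Sm c w.
Proof.
elim: v c w => [|x v IH] c w hc hp /=.
  by rewrite add0n subn0; apply: S_lb.
case: w hp => [|y w] hp.
  have := hp 0. rewrite /tail drop0 /= => h0.
  rewrite S_zero /norm1 /=; last by lia.
  have -> : x = 0 by lia. by rewrite !muln0.
have h1 : mono (fun n => c n.+1) by move=> n m h; apply: hc.
have := IH _ w h1 (vprec_cons _ _ _ _ hp).
have := hp 0. have := hp 1. rewrite /tail /= drop0 => ha hb.
have := hc 0 1 isT.
rewrite /norm1 /= => h2 h3.
have : c 0 * (sumn w - sumn v) <= c 1 * (sumn w - sumn v)
  by rewrite leq_mul2r h2 orbT.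
have e : y + sumn w - (x + sumn v) = (y + sumn w - (x + sumn v)) by [].
nia.
Qed.

Theorem mainTheorem6 (gamma : nat -> nat -> seq nat) (n' : nat) (v1 v2 : seq nat) :
  InGamma gamma -> 0 < n' ->
  vprec v1 v2 -> norm1 v1 < norm1 v2 ->
  norm1 (phi gamma n' v1) < norm1 (phi gamma n' v2).
Proof.
move=> [G1 G2] hn hp hlt.
pose c n := norm1 (gamma (minn n n') n').
have E v : norm1 (phi gamma n' v) = Sm c v.
  rewrite /phi norm1_foldr S_sum -map_comp sumnE big_map.
  apply: eq_bigr => n _; by rewrite /comp norm1_vscale norm1_cl.
have hc : mono c.
  move=> n m h; have := G2 n' (minn n n') (minn m n') hn.
  move=> H; have := H _ (geq_minr _ _) 0.
  rewrite /tail !drop0; apply.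
  by rewrite leq_min geq_minr andbT (leq_trans (geq_minl _ _)).
have c0 : 0 < c 0.
  have := G1 n' 0 hn isT 0.
  rewrite /c /hists /= /norm1 /tail !drop0 /vmax /evec /= !big_seq1 /=.
  by rewrite !big_seq1 /tail /= min0n.
rewrite !E.
have := S_main _ _ _ hc hp.
have : 0 < c 0 * (norm1 v2 - norm1 v1) by rewrite muln_gt0 c0 subn_gt0.
lia.
Qed.
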